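(* Let $m,n\ge1$, $\delta\in\mathbb Z$ with $\delta\ne m$, $N=m+n$, and let $\omega_k=\omega_k(M^{\mathfrak p}(\underline\delta))$. Then $\omega_0=m+n$, $\omega_1=-\delta m+\frac{(m+n)^2}{2}$, and for $k\ge2$ $$\omega_k=(\beta_1+\beta_2)\omega_{k-1}-\beta_1\beta_2\omega_{k-2},\qquad \beta_1=-\delta+\tfrac{m+n}2,\ \beta_2=\tfrac{n-m}2.$$ Equivalently, $\sum_{k\ge0}\omega_ku^{-k}=\dfrac{\omega_0+(\omega_1-(\beta_1+\beta_2)\omega_0)u^{-1}}{1-(\beta_1+\beta_2)u^{-1}+\beta_1\beta_2u^{-2}}$.
   Context: $\mathfrak{gl}_N$ with matrix units $E_{ij}$, $\epsilon_i$ dual to $E_{ii}$, Borel of upper triangular matrices; $\mathfrak p$ the standard parabolic with Levi $\mathfrak{gl}_m\oplus\mathfrak{gl}_n$; $M^{\mathfrak p}(\lambda)=U(\mathfrak{gl}_N)\otimes_{U(\mathfrak p)}E(\lambda)$ the parabolic Verma module; $\underline\delta=-\delta(\epsilon_1+\cdots+\epsilon_m)$. $V=\mathbb C^N$ with basis $v_i$, $E_{ij}v_k=\delta_{jk}v_i$; $V^*$ with dual basis $v_i^*$, $E_{ij}v_k^*=-\delta_{ik}v_j^*$. $\Omega=\sum_{i,j}E_{ij}\otimes E_{ji}$; on $M\otimes V\otimes V^*$ (factors numbered $0,1,2$) $y_1=\Omega_{01}+\frac N2$, with $\Omega_{01}$ the action of $\Omega$ on factors $0,1$. For a highest weight module $M$,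 $\omega_k(M)$ is the scalar by which $M\to M\otimes V\otimes V^*\xrightarrow{y_1^k}M\otimes V\otimes V^*\to M$ acts, the first map $m\mapsto\sum_j m\otimes v_j\otimes v_j^*$, the last $m\otimes v_i\otimes v_j^*\mapsto\delta_{ij}m$. *)

(* Defs.v *)
From HB Require Import structures.
From mathcomp Require Import all_boot all_order all_algebra all_field.
Set Implicit Arguments. Unset Strict Implicit. Unset Printing Implicit Defensive.
Import GRing.Theory Num.Theory.
Local Open Scope ring_scope.

(* A gl_N-module structure on M: rho i j is the action of the matrix unit E_ij,
   linear, satisfying [E_ij, E_kl] = delta_jk E_il - delta_li E_kj. *)
Definition gl_rep (N : nat) (M : lmodType algC) (rho : 'I_N -> 'I_N -> M -> M) : Prop :=
  (forall i j (a : algC) (x y : M), rho i j (a *: x + y) = a *: rho i j x + rho i j y) /\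
  (forall i j k l (x : M),
      rho i j (rho k l x) - rho k l (rho i j x)
      = (if j == k then rho i l x else 0) - (if l == i then rho k j x else 0)).

(* i and j lie in the same diagonal block of the Levi gl_m (+) gl_n *)
Definition same_block (m n : nat) (i j : 'I_(m + n)) : bool := ((i < m)%N == (j < m)%N).

(* w spans a copy of the one-dimensional p-module E(lam): every E_ij in p
   (i<j, or i,j in the same Levi block) with i<>j kills w, and E_ii w = lam_i w. *)
Definition pvec (m n : nat) (M : lmodType algC) (rho : 'I_(m + n) -> 'I_(m + n) -> M -> M)
    (lam : 'I_(m + n) -> algC) (w : M) : Prop :=
  (forall i j : 'I_(m + n), (i < j)%N || same_block i j -> i != j -> rho i j w = 0) /\
  (forall i, rho i i w = lam i *: w).

Definition gl_hom (N : nat) (M W : lmodType algC) (rhoM : 'I_N -> 'I_N -> M -> M)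
    (rhoW : 'I_N -> 'I_N -> W -> W) (f : M -> W) : Prop :=
  (forall (a : algC) x y, f (a *: x + y) = a *: f x + f y) /\
  (forall i j x, f (rhoM i j x) = rhoW i j (f x)).

(* (M, v) is the parabolic Verma module U(gl_N) (x)_{U(p)} E(lam) with generator
   v = 1 (x) 1, characterised by its universal property (induction). *)
Definition is_parabolic_Verma (m n : nat) (M : lmodType algC)
    (rho : 'I_(m + n) -> 'I_(m + n) -> M -> M) (lam : 'I_(m + n) -> algC) (v : M) : Prop :=
  pvec rho lam v /\
  forall (W : lmodType algC) (rhoW : 'I_(m + n) -> 'I_(m + n) -> W -> W) (w : W),
    gl_rep rhoW -> pvec rhoW lam w ->
    exists f : M -> W, [/\ gl_hom rho rhoW f, f v = w &
      forall g : M -> W, gl_hom rho rhoW g -> g v = w -> forall x, g x = f x].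

(* M (x) V (x) V^* with V = C^N, written in the basis v_i (x) v_j^*:
   t i j is the M-coefficient of v_i (x) v_j^*. *)
Definition tens (N : nat) (M : lmodType algC) := 'I_N -> 'I_N -> M.

(* E_ba acting on factor 1 (V):  E_ba v_i = delta_ai v_b *)
Definition E_on_V (N : nat) (M : lmodType algC) (b a : 'I_N) (t : tens N M) : tens N M :=
  fun c j => if c == b then t a j else 0.

Definition E_on_M (N : nat) (M : lmodType algC) (rho : 'I_N -> 'I_N -> M -> M)
    (a b : 'I_N) (t : tens N M) : tens N M :=
  fun i j => rho a b (t i j).

(* Omega_01 = sum_{a,b} E_ab (x) E_ba (x) 1 *)
Definition Omega01 (N : nat) (M : lmodType algC) (rho : 'I_N -> 'I_N -> M -> M)
    (t : tens N M) : tens N M :=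
  fun c j => \sum_(a < N) \sum_(b < N) E_on_M rho a b (E_on_V b a t) c j.

Definition y1 (N : nat) (M : lmodType algC) (rho : 'I_N -> 'I_N -> M -> M)
    (t : tens N M) : tens N M :=
  fun c j => Omega01 rho t c j + (N%:R / 2) *: t c j.

(* m |-> sum_j m (x) v_j (x) v_j^* *)
Definition coev (N : nat) (M : lmodType algC) (x : M) : tens N M :=
  fun i j => if i == j then x else 0.

(* m (x) v_i (x) v_j^* |-> delta_ij m *)
Definition ev (N : nat) (M : lmodType algC) (t : tens N M) : M := \sum_(i < N) t i i.

Definition omega_is (N : nat) (M : lmodType algC) (rho : 'I_N -> 'I_N -> M -> M)
    (k : nat) (c : algC) : Prop :=
  forall x : M, ev (iter k (y1 rho) (@coev N M x)) = c *: x.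

(* the weight underline-delta = -delta (eps_1 + ... + eps_m) *)
Definition ulam (m n : nat) (delta : int) : 'I_(m + n) -> algC :=
  fun i => if (i < m)%N then - (delta%:~R) else 0.

(* Main.v *)
Require Import Defs.
From HB Require Import structures.
From mathcomp Require Import all_boot all_order all_algebra all_field.
From Stdlib Require Import FunctionalExtensionality.
From mathcomp Require Import ring.
Import GRing.Theory Num.Theory.
Local Open Scope ring_scope.

Lemma rhoD (N : nat) (M : lmodType algC) (rho : 'I_N -> 'I_N -> M -> M)
  (h : gl_rep rho) i j x y : rho i j (x + y) = rho i j x + rho i j y.
Proof. by have := h.1 i j 1 x y; rewrite !scale1r. Qed.

Lemma rho0 (N : nat) (M : lmodType algC) (rho : 'I_N -> 'I_N -> M -> M)
  (h : gl_rep rho) i j : rho i j 0 = 0.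
Proof. by apply/(addrI (rho i j 0)); rewrite -rhoD // !addr0. Qed.

Lemma rhoZ (N : nat) (M : lmodType algC) (rho : 'I_N -> 'I_N -> M -> M)
  (h : gl_rep rho) i j a x : rho i j (a *: x) = a *: rho i j x.
Proof. by have := h.1 i j a x 0; rewrite addr0 rho0 // addr0. Qed.

Lemma rhoN (N : nat) (M : lmodType algC) (rho : 'I_N -> 'I_N -> M -> M)
  (h : gl_rep rho) i j x : rho i j (- x) = - rho i j x.
Proof. by rewrite -scaleN1r rhoZ // scaleN1r. Qed.

Lemma rhoB (N : nat) (M : lmodType algC) (rho : 'I_N -> 'I_N -> M -> M)
  (h : gl_rep rho) i j x y : rho i j (x - y) = rho i j x - rho i j y.
Proof. by rewrite rhoD // rhoN. Qed.

Lemma rho_sum (N : nat) (M : lmodType algC) (rho : 'I_N -> 'I_N -> M -> M)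
  (h : gl_rep rho) i j (F : 'I_N -> M) :
  rho i j (\sum_(b < N) F b) = \sum_(b < N) rho i j (F b).
Proof.
apply: (big_ind2 (fun x y => rho i j x = y)) => //; first exact: rho0.
by move=> x1 y1 x2 y2 <- <-; rewrite rhoD.
Qed.

Lemma sum_delta (N : nat) (M : lmodType algC) (j : 'I_N) (F : 'I_N -> M) :
  \sum_(b < N) (if b == j then F b else 0) = F j.
Proof. by rewrite -big_mkcond big_pred1_eq. Qed.

Lemma sum_delta' (N : nat) (M : lmodType algC) (j : 'I_N) (F : 'I_N -> M) :
  \sum_(b < N) (if j == b then F b else 0) = F j.
Proof. by rewrite -(@sum_delta _ _ j F); apply: eq_bigr => b _; rewrite eq_sym. Qed.

Lemma OmegaE (N : nat) (M : lmodType algC) (rho : 'I_N -> 'I_N -> M -> M)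
  (h : gl_rep rho) (T : tens N M) c j :
  Omega01 rho T c j = \sum_(a < N) rho a c (T a j).
Proof.
rewrite /Omega01; apply: eq_bigr => a _; rewrite /E_on_M /E_on_V.
rewrite -[RHS](@sum_delta _ _ c (fun b => rho a b (T a j))).
by apply: eq_bigr => b _; rewrite eq_sym; case: (b == c); rewrite ?rho0.
Qed.

Definition tlc (N : nat) (M : lmodType algC) (a : algC) (T : tens N M) (b : algC)
  (T' : tens N M) : tens N M := fun c j => a *: T c j + b *: T' c j.
Arguments tlc {N M}.

Lemma y1_lc (N : nat) (M : lmodType algC) (rho : 'I_N -> 'I_N -> M -> M)
  (h : gl_rep rho) a T b T' :
  y1 rho (tlc a T b T') = tlc a (y1 rho T) b (y1 rho T').
Proof.
apply: functional_extensionality => c; apply: functional_extensionality => j.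
rewrite /y1 /tlc !OmegaE //.
under eq_bigr => x _ do rewrite rhoD // !rhoZ //.
rewrite big_split /= -!scaler_sumr !scalerDr !scalerA [_ * a]mulrC [_ * b]mulrC -!scalerA.
by rewrite addrACA.
Qed.

Lemma iter_lc (N : nat) (M : lmodType algC) (rho : 'I_N -> 'I_N -> M -> M)
  (h : gl_rep rho) k a T b T' :
  iter k (y1 rho) (tlc a T b T') = tlc a (iter k (y1 rho) T) b (iter k (y1 rho) T').
Proof. by elim: k => [|k IH] //=; rewrite IH y1_lc. Qed.

Lemma ev_lc (N : nat) (M : lmodType algC) a (T : tens N M) b T' :
  ev (tlc a T b T') = a *: ev T + b *: ev T'.
Proof. by rewrite /ev /tlc big_split /= -!scaler_sumr. Qed.

Lemma coev_lc (N : nat) (M : lmodType algC) a (x y : M) :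
  @coev N M (a *: x + y) = tlc a (coev x) 1 (coev y).
Proof.
apply: functional_extensionality => c; apply: functional_extensionality => j.
by rewrite /coev /tlc; case: (c == j); rewrite ?scale1r ?scaler0 ?addr0.
Qed.

Definition RW (N : nat) (M : lmodType algC) (rho : 'I_N -> 'I_N -> M -> M) i j
  (T : tens N M) : tens N M :=
  fun c a => rho i j (T c a) + (if c == i then T j a else 0) - (if a == j then T c i else 0).
Arguments RW {N M}.

Lemma coev_RW (N : nat) (M : lmodType algC) (rho : 'I_N -> 'I_N -> M -> M)
  (h : gl_rep rho) i j x :
  coev (rho i j x) = RW rho i j (@coev N M x).
Proof.
apply: functional_extensionality => c; apply: functional_extensionality => a.
rewrite /coev /RW.
case: (c =P a) => [<-|ne].
  case: (c =P i) => [_|_]; last by rewrite if_same addr0 subr0.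
  by rewrite [j == c]eq_sym; case: (c == j); rewrite ?addrK ?addr0 ?subr0.
rewrite rho0 // add0r.
case: (c =P i) => [_|_]; last by rewrite !if_same subr0.
case: (a =P j) => [e|ne2]; first by rewrite e eqxx subrr.
by case: (j =P a) => [e|_]; [case: ne2; rewrite e | rewrite subr0].
Qed.

Lemma L1 (V : zmodType) (A B C a b c : V) : A + B - C + (a + b - c) = A + a + (B + b) - (C + c).
Proof. by rewrite opprD addrACA [A + B + _]addrACA. Qed.
Lemma L3 (V : zmodType) (A C a c : V) : A - C + (a - c) = A + a - (C + c).
Proof. by rewrite opprD addrACA. Qed.

Lemma rho_if (N : nat) (M : lmodType algC) (rho : 'I_N -> 'I_N -> M -> M)
  (h : gl_rep rho) i j (b : bool) x : rho i j (if b then x else 0) = if b then rho i j x else 0.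
Proof. by case: b; rewrite ?rho0. Qed.

Lemma sum_if (N : nat) (M : lmodType algC) (b : bool) (F : 'I_N -> M) :
  \sum_(k < N) (if b then F k else 0) = if b then \sum_(k < N) F k else 0.
Proof. by case: b => //; rewrite big1. Qed.

Lemma comm_rho (N : nat) (M : lmodType algC) (rho : 'I_N -> 'I_N -> M -> M)
  (h : gl_rep rho) i j k l x :
  rho i j (rho k l x) = rho k l (rho i j x) +
     ((if j == k then rho i l x else 0) - (if l == i then rho k j x else 0)).
Proof. by rewrite -h.2 addrC subrK. Qed.

Lemma Omega_RW (N : nat) (M : lmodType algC) (rho : 'I_N -> 'I_N -> M -> M)
  (h : gl_rep rho) i j (T : tens N M) c a :
  Omega01 rho (RW rho i j T) c a = RW rho i j (Omega01 rho T) c a.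
Proof.
rewrite /RW; repeat rewrite (OmegaE _ _ _ h).
under eq_bigr => b _ do rewrite rhoB // rhoD // !rho_if //.
rewrite sumrB big_split /= sum_delta !sum_if rho_sum //.
under [X in _ = X + _ - _]eq_bigr => b _ do rewrite comm_rho //.
rewrite big_split /= sumrB sum_delta' sum_if.
by congr (_ - _); rewrite addrA subrK.
Qed.

Lemma y1_RW (N : nat) (M : lmodType algC) (rho : 'I_N -> 'I_N -> M -> M)
  (h : gl_rep rho) i j (T : tens N M) :
  y1 rho (RW rho i j T) = RW rho i j (y1 rho T).
Proof.
apply: functional_extensionality => c; apply: functional_extensionality => a.
rewrite /y1 Omega_RW // /RW rhoD // rhoZ //.
case: (c == i); case: (a == j); rewrite ?subr0 ?addr0 ?scalerBr ?scalerDr.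
- exact: L1.
- exact: addrACA.
- exact: L3.
- by [].
Qed.

Lemma ev_RW (N : nat) (M : lmodType algC) (rho : 'I_N -> 'I_N -> M -> M)
  (h : gl_rep rho) i j (T : tens N M) :
  ev (RW rho i j T) = rho i j (ev T).
Proof.
rewrite /ev /RW sumrB big_split /= rho_sum // sum_delta sum_delta.
by rewrite addrK.
Qed.

Lemma iter_RW (N : nat) (M : lmodType algC) (rho : 'I_N -> 'I_N -> M -> M)
  (h : gl_rep rho) i j k (T : tens N M) :
  iter k (y1 rho) (RW rho i j T) = RW rho i j (iter k (y1 rho) T).
Proof. by elim: k => [|k IH] //=; rewrite IH y1_RW. Qed.

Lemma F_hom (N : nat) (M : lmodType algC) (rho : 'I_N -> 'I_N -> M -> M)
  (h : gl_rep rho) i j k x :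
  ev (iter k (y1 rho) (@coev N M (rho i j x))) = rho i j (ev (iter k (y1 rho) (@coev N M x))).
Proof. by rewrite coev_RW // iter_RW // ev_RW. Qed.

Lemma F_lin (N : nat) (M : lmodType algC) (rho : 'I_N -> 'I_N -> M -> M)
  (h : gl_rep rho) k a x y :
  ev (iter k (y1 rho) (@coev N M (a *: x + y))) =
  a *: ev (iter k (y1 rho) (@coev N M x)) + ev (iter k (y1 rho) (@coev N M y)).
Proof. by rewrite coev_lc iter_lc // ev_lc scale1r. Qed.

Lemma Ycoev (N : nat) (M : lmodType algC) (rho : 'I_N -> 'I_N -> M -> M)
  (h : gl_rep rho) x a j :
  y1 rho (@coev N M x) a j = rho j a x + (N%:R / 2) *: (if a == j then x else 0).
Proof.
rewrite /y1 (OmegaE _ _ _ h) /coev.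
by under eq_bigr => b _ do rewrite rho_if //; rewrite sum_delta.
Qed.

Lemma zero_col (m n : nat) (delta : int) (M : lmodType algC)
  (rho : 'I_(m + n) -> 'I_(m + n) -> M -> M) (v : M)
  (pv : pvec rho (@ulam m n delta) v) (c j : 'I_(m + n)) :
  (m <= c)%N -> rho j c v = 0.
Proof.
move=> hc; case: (j =P c) => [->|ne].
  by rewrite pv.2 /ulam ltnNge hc /= scale0r.
apply: pv.1; last by apply/eqP.
rewrite /same_block; case: ltnP => //= hjc.
by rewrite !ltnNge hc (leq_trans hc hjc).
Qed.
Arguments zero_col {m n delta M rho v} pv c j.

Lemma low_v (m n : nat) (delta : int) (M : lmodType algC)
  (rho : 'I_(m + n) -> 'I_(m + n) -> M -> M) (v : M)
  (pv : pvec rho (@ulam m n delta) v) (b c : 'I_(m + n)) :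
  (b < m)%N -> (c < m)%N -> rho b c v = if b == c then - delta%:~R *: v else 0.
Proof.
move=> hb hc; case: (b =P c) => [->|ne].
  by rewrite pv.2 /ulam hc.
by apply: pv.1; [rewrite /same_block hb hc orbT | apply/eqP].
Qed.
Arguments low_v {m n delta M rho v} pv b c.

Lemma sum_ulam (m n : nat) (delta : int) :
  \sum_(a < m + n) @ulam m n delta a = - delta%:~R * m%:R.
Proof.
rewrite big_split_ord /=.
rewrite [X in _ + X]big1; last first.
  by move=> i _; rewrite /ulam /=; rewrite ltnNge leq_addr.
rewrite (eq_bigr (fun _ => - delta%:~R)); last by move=> i _; rewrite /ulam /= ltn_ord.
by rewrite addr0 sumr_const card_ord mulr_natr.
Qed.

Lemma key_sum (m n : nat) (delta : int) (M : lmodType algC)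
  (rho : 'I_(m + n) -> 'I_(m + n) -> M -> M) (v : M) (h : gl_rep rho)
  (pv : pvec rho (@ulam m n delta) v) (c j : 'I_(m + n)) :
  \sum_(a < m + n) rho j a (rho a c v) = (n%:R - delta%:~R) *: rho j c v.
Proof.
case: (leqP m c) => hc.
  rewrite big1; last by move=> a _; rewrite (zero_col pv) // rho0.
  by rewrite (zero_col pv) // scaler0.
have E : forall a : 'I_(m + n), rho j a (rho a c v) =
  (if a == c then - delta%:~R *: rho j c v else 0) + (if (m <= a)%N then rho j c v else 0).
  move=> a; case: (ltnP a m) => ha.
    rewrite (low_v pv) // rho_if // rhoZ //.
    by rewrite addr0; case: eqP => [->|].
  rewrite (comm_rho _ _ _ h j a a c v) (zero_col pv) // rho0 // (zero_col pv a a) // eqxx if_same subr0 add0r.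
  have -> : (a == c) = false.
    by apply/negbTE/negP => /eqP e; move: ha; rewrite e leqNgt hc.
  by rewrite add0r.
rewrite (eq_bigr _ (fun a _ => E a)) big_split /= sum_delta.
rewrite big_split_ord /= big1; last by move=> i _; rewrite leqNgt ltn_ord.
rewrite (eq_bigr (fun _ => rho j c v)); last by move=> i _; rewrite leq_addr.
rewrite add0r sumr_const card_ord -scaler_nat scalerBl scaleNr; exact: addrC.
Qed.

Lemma shapeL (R : pzRingType) (M : lmodType R) (u w : M) (x1 x2 x3 x4 : R) :
  x1 *: u + (x2 *: w - x3 *: u) + x4 *: u + x4 *: (u + x4 *: w) =
  (x1 - x3 + x4 + x4) *: u + (x2 + x4 * x4) *: w.
Proof.
rewrite scalerDr scalerA !scalerDl scaleNr -!addrA; congr (_ + _).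
rewrite addrCA; congr (_ + _); rewrite addrCA; congr (_ + _); exact: addrCA.
Qed.
Lemma shapeR (R : comPzRingType) (M : lmodType R) (u w : M) (y1 y2 y3 : R) :
  y1 *: (u + y2 *: w) + y3 *: w = y1 *: u + (y1 * y2 + y3) *: w.
Proof. by rewrite scalerDr scalerA scalerDl addrA. Qed.

Lemma T2 (m n : nat) (delta : int) (M : lmodType algC)
  (rho : 'I_(m + n) -> 'I_(m + n) -> M -> M) (v : M) (h : gl_rep rho)
  (pv : pvec rho (@ulam m n delta) v) (s p : algC)
  (hs : s = n%:R - delta%:~R)
  (hp : ((m + n)%:R / 2) * ((m + n)%:R / 2) + (- delta%:~R * m%:R) = s * ((m + n)%:R / 2) - p) :
  y1 rho (y1 rho (@coev (m + n) M v)) = tlc s (y1 rho (coev v)) (- p) (coev v).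
Proof.
apply: functional_extensionality => c; apply: functional_extensionality => j.
rewrite /tlc.
have -> : y1 rho (y1 rho (@coev (m + n) M v)) c j =
  Omega01 rho (y1 rho (coev v)) c j + ((m + n)%:R / 2) *: y1 rho (coev v) c j by [].
rewrite (OmegaE _ _ _ h).
under eq_bigr => a _ do rewrite (Ycoev _ _ _ h) rhoD // rhoZ // rho_if //.
rewrite big_split /= -scaler_sumr sum_delta.
under eq_bigr => a _ do rewrite (comm_rho _ _ _ h a c j a v) eqxx.
rewrite big_split /= sumrB (key_sum _ _ _ _ _ _ h pv) sum_if sumr_const card_ord.
under eq_bigr => a _ do rewrite pv.2.
rewrite -scaler_suml sum_ulam !(Ycoev _ _ _ h) /coev.
set u := rho j c v.
have -> : (if c == j then (- delta%:~R * m%:R) *: v else 0) = (- delta%:~R * m%:R) *: (if c == j then v else 0).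
  by case: (c == j); rewrite ?scaler0.
set w := (if c == j then v else 0).
rewrite -scaler_nat shapeL shapeR; congr (_ *: _ + _ *: _).
  by rewrite hs natrD; field.
by rewrite -hp addrC.
Qed.

Fixpoint oms (w0 w1 s p : algC) (k : nat) : algC * algC :=
  match k with
  | 0 => (w0, w1)
  | k'.+1 => ((oms w0 w1 s p k').2, s * (oms w0 w1 s p k').2 - p * (oms w0 w1 s p k').1)
  end.

Theorem mainTheorem20 (m n : nat) (delta : int)
  (hm : (0 < m)%N) (hn : (0 < n)%N) (hdelta : delta != m%:Z)
  (M : lmodType algC) (rho : 'I_(m + n) -> 'I_(m + n) -> M -> M) (v : M)
  (hrep : gl_rep rho) (hV : @is_parabolic_Verma m n M rho (@ulam m n delta) v) :
  let beta1 : algC := - delta%:~R + (m + n)%:R / 2 in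
  let beta2 : algC := (n%:R - m%:R) / 2 in
  exists omega : nat -> algC,
    [/\ forall k, omega_is rho k (omega k),
        omega 0%N = (m + n)%:R,
        omega 1%N = - delta%:~R * m%:R + (m + n)%:R ^+ 2 / 2
      & forall k, (2 <= k)%N ->
          omega k = (beta1 + beta2) * omega k.-1 - beta1 * beta2 * omega k.-2].
Proof.
move=> beta1 beta2.
set w0 : algC := (m + n)%:R.
set w1 : algC := - delta%:~R * m%:R + (m + n)%:R ^+ 2 / 2.
set s := beta1 + beta2; set p := beta1 * beta2.
have pv := hV.1.
pose om k := (oms w0 w1 s p k).1.
exists om; split => //; last first.
  by case=> [|[|k]] //= _; rewrite /om /= mulrA.
pose F k (x : M) := ev (iter k (y1 rho) (@coev (m + n) M x)).
have hs : s = n%:R - delta%:~R.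
  by rewrite /s /beta1 /beta2 natrD; field.
have hp : ((m + n)%:R / 2) * ((m + n)%:R / 2) + (- delta%:~R * m%:R) = s * ((m + n)%:R / 2) - p.
  by rewrite /s /p /beta1 /beta2 natrD; field.
have T2' := T2 _ _ _ _ _ _ hrep pv _ _ hs hp.
have F0 : F 0%N v = w0 *: v.
  rewrite /F /= /ev /coev.
  under eq_bigr => i _ do rewrite eqxx.
  by rewrite sumr_const card_ord -scaler_nat.
have F1 : F 1%N v = w1 *: v.
  rewrite /F /= /ev.
  under eq_bigr => i _ do rewrite (Ycoev _ _ _ hrep) eqxx pv.2.
  rewrite big_split /= -scaler_suml sum_ulam sumr_const card_ord -scaler_nat scalerA -scalerDl.
  by congr (_ *: _); rewrite /w1; field.
have Fv : forall k, F k v = om k *: v /\ F k.+1 v = om k.+1 *: v.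
  elim=> [|k [IH1 IH2]]; first by split; [exact: F0 | exact: F1].
  split => //.
  rewrite /F -addn2 iterD /= T2' iter_lc // ev_lc.
  rewrite -/(iter k.+1 (y1 rho) (coev v)) -iterSr.
  rewrite -/(F k.+1 v) -/(F k v) IH2 IH1 !scalerA -scalerDl.
  by rewrite /om addn2 /= mulNr.
move=> k x.
have [f [fh fv funi]] := hV.2 M rho 0 hrep (conj (fun i j _ _ => rho0 _ _ _ hrep i j)
   (fun i => etrans (rho0 _ _ _ hrep i i) (esym (scaler0 _ _)))).
pose g y := F k y - om k *: y.
have gh : gl_hom rho rho g.
  split.
    move=> a y z; rewrite /g /F F_lin // scalerBr scalerDr !scalerA [om k * a]mulrC.
    by rewrite -scalerA L3.
  move=> i j y; rewrite /g /F F_hom // rhoB // rhoZ //.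
have zh : gl_hom rho rho (fun _ : M => (0 : M)).
  by split => [a y z|i j y]; rewrite ?scaler0 ?addr0 ?rho0.
have g0 : g v = 0 by rewrite /g (Fv k).1 subrr.
have e1 := funi g gh g0 x.
have e2 := funi _ zh (erefl _) x.
move/eqP: (etrans e1 (esym e2)); rewrite subr_eq0 => /eqP.
by [].
Qed.
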